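(* For $n\ge3$, the priority lattice $\Pi(n)$ is not self-dual (it is not isomorphic to its order dual).
   Context: $[n]_0=\{0,\dots,n\}$. A priority forest on $[n]_0$ is a rooted forest with vertex set $[n]_0$ whose component trees $T_0,T_1,\dots$ are increasing (each non-root vertex has a larger label than its parent) and satisfy: for $j<k$ every label of $T_j$ is smaller than every label of $T_k$. The priority lattice $\Pi(n)$ is the set of priority forests on $[n]_0$, ordered by $P\le P'$ iff $E(P)\subseteq E(P')$, together with an extra element $\hat1$ greater than all priority forests. *)

(* Defs.v *)
From mathcomp Require Import all_boot.
Set Implicit Arguments. Unset Strict Implicit. Unset Printing Implicit Defensive.

(* Vertex set [n]_0 = {0,...,n} is 'I_n.+1.  A rooted forest on [n]_0 is given by
   its parent function: [par v = None] iff v is a root, [par v = Some u] iff u is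
   the parent of v (edge u -> v). *)
Definition parfun (n : nat) := {ffun 'I_n.+1 -> option 'I_n.+1}.

(* increasing: every non-root vertex has larger label than its parent.
   (This also guarantees acyclicity, so par defines a rooted forest.) *)
Definition increasing n (par : parfun n) : bool :=
  [forall v, if par v is Some u then u < v else true].

Definition step n (par : parfun n) (v : 'I_n.+1) : 'I_n.+1 :=
  if par v is Some u then u else v.

(* the root of the component tree containing v (parent chains strictly
   decrease in an increasing forest, so n+1 steps reach the root) *)
Definition froot n (par : parfun n) (v : 'I_n.+1) : 'I_n.+1 :=
  iter n.+1 (step par) v.

(* component trees can be listed T_0, T_1, ... such that for j < k every label of
   T_j is smaller than every label of T_k; equivalently any two distinct
   components are comparable in this sense. *)
Definition trees_ordered n (par : parfun n) : bool :=
  [forall x, forall y, (froot par x != froot par y) ==>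
     ([forall x', forall y', ((froot par x' == froot par x) &&
                              (froot par y' == froot par y)) ==> (x' < y')] ||
      [forall x', forall y', ((froot par x' == froot par x) &&
                              (froot par y' == froot par y)) ==> (y' < x')])].

Definition priority_forest n (par : parfun n) : bool :=
  increasing par && trees_ordered par.

Definition edges n (par : parfun n) : {set 'I_n.+1 * 'I_n.+1} :=
  [set e | par e.2 == Some e.1].

(* carrier of Pi(n): None is the extra top element \hat 1 *)
Definition in_Pi n (x : option (parfun n)) : bool :=
  if x is Some p then priority_forest p else true.

Definition Pi (n : nat) := {x : option (parfun n) | in_Pi x}.

Definition Pi_le n (x y : Pi n) : bool :=
  match val x, val y with
  | _, None => true
  | None, Some _ => false
  | Some p, Some q => edges p \subset edges q
  end.

Definition Pi_self_dual n : Prop :=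
  exists f : Pi n -> Pi n, bijective f /\ forall x y, Pi_le x y = Pi_le (f y) (f x).

(* Main.v *)
From Pilot Require Import Defs.
From HB Require Import structures.
From mathcomp Require Import all_boot zify.
Import Pilot.Defs.

Set Implicit Arguments. Unset Strict Implicit. Unset Printing Implicit Defensive.

HB.instance Definition _ n := Finite.copy (Pi n) {x : option (parfun n) | in_Pi x}.

Definition is_min (T : finType) (le : rel T) x := [forall z, le x z].
Definition is_max (T : finType) (le : rel T) x := [forall z, le z x].
Definition atom (T : finType) (le : rel T) x :=
  ~~ is_min le x && [forall y, le y x ==> (y == x) || is_min le y].
Definition coatom (T : finType) (le : rel T) x :=
  ~~ is_max le x && [forall y, le x y ==> (y == x) || is_max le y].

Lemma coatom_atom (T : finType) (le : rel T) (f : T -> T) :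
  bijective f -> (forall x y, le x y = le (f y) (f x)) ->
  forall c, coatom le c -> atom le (f c).
Proof.
move=> [g fK gK] anti c /andP [nmax hall].
have max_min m : is_max le m -> is_min le (f m).
  move=> hm; apply/forallP => z; rewrite -(gK z) -anti; exact: (forallP hm (g z)).
have min_max m : is_min le (f m) -> is_max le m.
  move=> hm; apply/forallP => z; rewrite anti; exact: (forallP hm (f z)).
apply/andP; split.
  by apply/negP => /min_max; rewrite (negbTE nmax).
apply/forallP => y; apply/implyP => hy.
rewrite -(gK y) in hy *; rewrite -anti in hy.
case/orP: (implyP (forallP hall (g y)) hy) => [/eqP -> | /max_min ->].
  by rewrite eqxx.
by rewrite orbT.
Qed.

Lemma iter_fix n (p : parfun n) v : p v = None -> forall k, iter k (step p) v = v.
Proof. by move=> h; elim=> //= k ->; rewrite /step h. Qed.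

Lemma froot_root n (p : parfun n) v : p v = None -> froot p v = v.
Proof. by move=> h; rewrite /froot (iter_fix h). Qed.

Lemma froot_child n (p : parfun n) v u : p v = Some u -> p u = None -> froot p v = u.
Proof. by move=> hv hu; rewrite /froot iterSr {2}/step hv (iter_fix hu). Qed.

Lemma froot_full n (p : parfun n) : increasing p ->
  (forall v, 0 < nat_of_ord v -> p v != None) -> forall v, froot p v = ord0.
Proof.
move=> inc full v.
have H w : nat_of_ord (step p w) <= (nat_of_ord w).-1.
  rewrite /step; case E: (p w) => [u|].
    by have := forallP inc w; rewrite E; lia.
  case: (posnP (nat_of_ord w)) => [->|pos] //.
  by have := full w pos; rewrite E.
have H2 k : nat_of_ord (iter k (step p) v) <= nat_of_ord v - k.
  elim: k => [|k IH] /=; first by lia.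
  have := H (iter k (step p) v); lia.
apply: ord_inj => /=; have := H2 n.+1; have := ltn_ord v; rewrite /froot; lia.
Qed.

Definition mk n (g : nat -> option nat) : parfun n :=
  [ffun v : 'I_n.+1 => omap (@inord n) (g (nat_of_ord v))].

Lemma increasing_mk n g : (forall v u, g v = Some u -> u < v) -> increasing (mk n g).
Proof.
move=> H; apply/forallP => v; rewrite ffunE; case E: (g (nat_of_ord v)) => [u|] //=.
have := H _ _ E; have := ltn_ord v; move=> h1 h2; rewrite inordK; lia.
Qed.

Lemma trees_ordered_r n (p : parfun n) (r : nat -> nat) :
  (forall x, nat_of_ord (froot p x) = r (nat_of_ord x)) ->
  (forall a b c d, r a = r c -> r b = r d -> r c != r d ->
      (r c < r d -> a < b) /\ (r d < r c -> b < a)) ->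
  trees_ordered p.
Proof.
move=> Hr P; apply/forallP => x; apply/forallP => y; apply/implyP => neq.
have neq' : r (nat_of_ord x) != r (nat_of_ord y).
  apply/negP => /eqP e; move/negP: neq; apply; apply/eqP; apply: ord_inj.
  by rewrite !Hr.
case: (ltngtP (r (nat_of_ord x)) (r (nat_of_ord y))) => h; last by rewrite h eqxx in neq'.
- apply/orP; left; apply/forallP => x'; apply/forallP => y'.
  apply/implyP => /andP [/eqP h1 /eqP h2].
  have h1' := congr1 (@nat_of_ord _) h1; have h2' := congr1 (@nat_of_ord _) h2; rewrite !Hr in h1' h2'.
  exact: (P _ _ _ _ h1' h2' neq').1.
- apply/orP; right; apply/forallP => x'; apply/forallP => y'.
  apply/implyP => /andP [/eqP h1 /eqP h2].
  have h1' := congr1 (@nat_of_ord _) h1; have h2' := congr1 (@nat_of_ord _) h2; rewrite !Hr in h1' h2'.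
  exact: (P _ _ _ _ h1' h2' neq').2.
Qed.

Definition botp n := mk n (fun _ => None).

Lemma botP n : in_Pi (Some (botp n)).
Proof.
rewrite /= /priority_forest increasing_mk //=.
apply: (@trees_ordered_r _ _ id).
  by move=> x; rewrite froot_root // ffunE.
move=> a b c d /= -> ->; lia.
Qed.

Definition PiBot n : Pi n := exist _ (Some (botp n)) (botP n).
Definition PiTop n : Pi n := exist _ None isT.

Definition Eg (k : nat) (v : nat) := if v == k.+1 then Some k else None.
Definition Ep n k := mk n (Eg k).

Lemma Ep_froot n (k : 'I_n) x :
  nat_of_ord (froot (Ep n k) x) = (if nat_of_ord x == k.+1 then nat_of_ord k else nat_of_ord x).
Proof.
have kn : nat_of_ord k < n.+1 by have := ltn_ord k; lia.
case: (eqVneq (nat_of_ord x) k.+1) => hx.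
  rewrite (@froot_child _ _ _ (inord k)) ?inordK //.
    by rewrite ffunE /Eg hx eqxx.
  by rewrite ffunE /Eg inordK // (_ : (nat_of_ord k == (nat_of_ord k).+1) = false) //; lia.
by rewrite froot_root // ffunE /Eg (negbTE hx).
Qed.

Lemma EP n (k : 'I_n) : in_Pi (Some (Ep n k)).
Proof.
rewrite /= /priority_forest increasing_mk /=; last first.
  by move=> v u; rewrite /Eg; case: eqP => // -> [<-].
apply: (@trees_ordered_r _ _ (fun t => if t == k.+1 then nat_of_ord k else t)).
  exact: Ep_froot.
move=> a b c d.
case: (a =P k.+1); case: (b =P k.+1); case: (c =P k.+1); case: (d =P k.+1); lia.
Qed.

Definition PiE n (k : 'I_n) : Pi n := exist _ (Some (Ep n k)) (EP k).

Lemma PiE_not_min n (k : 'I_n) : ~~ Pi_le (PiE k) (PiBot n).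
Proof.
rewrite /Pi_le /=; apply/negP => /subsetP /(_ (inord k, inord k.+1)).
have h1 : nat_of_ord k < n.+1 by have := ltn_ord k; lia.
have h2 : k.+1 < n.+1 by have := ltn_ord k; lia.
rewrite !inE /= !ffunE /Eg !inordK // eqxx /=.
by rewrite eqxx; move=> /(_ isT).
Qed.

Lemma PiE_le n (k : 'I_n) (p : parfun n) (h : in_Pi (Some p)) :
  p (inord k.+1) = Some (inord k) -> Pi_le (PiE k) (exist _ (Some p) h).
Proof.
move=> hp; rewrite /Pi_le /=; apply/subsetP => [[a b]]; rewrite !inE /= ffunE /Eg.
case: (nat_of_ord b =P k.+1) => //= hb /eqP [<-].
by rewrite -hb inord_val in hp; rewrite hp.
Qed.

Lemma exists_edge n (p : parfun n) : priority_forest p -> (exists v, p v != None) ->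
  exists k : 'I_n, p (inord k.+1) = Some (inord k).
Proof.
case/andP => inc tord [v0 hv0].
have ex : exists i, (i <= n) && (p (inord i) != None).
  by exists (nat_of_ord v0); rewrite -ltnS ltn_ord inord_val hv0.
case: (ex_minnP ex) => v /andP [vle hv] vmin.
case E: (p (inord v)) hv => [u|] // _.
have uv : u < v.
  by have := forallP inc (inord v); rewrite E inordK //; lia.
have hu : p u = None.
  case Eu: (p u) => [w|] //.
  have := vmin (nat_of_ord u); rewrite inord_val Eu /=.
  have := ltn_ord u; move=> hu1 /(_ (_ : _)) => H.
  have : v <= u by apply: H; rewrite -ltnS hu1.
  lia.
have vpos : 0 < v by lia.
have uvv : nat_of_ord u = v.-1.
  apply/eqP; rewrite eqn_leq; apply/andP; split; first by lia.
  rewrite leqNgt; apply/negP => ult.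
  set w : 'I_n.+1 := inord v.-1.
  have wv : nat_of_ord w = v.-1 by rewrite inordK //; lia.
  have hw : p w = None.
    case Ew: (p w) => [z|] //.
    have : v <= v.-1 by apply: vmin; rewrite /= -/w Ew andbT; lia.
    lia.
  have r1 : froot p (inord v) = u by apply: froot_child.
  have r2 : froot p w = w by apply: froot_root.
  have r3 : froot p u = u by apply: froot_root.
  have := implyP (forallP (forallP tord (inord v)) w).
  rewrite r1 r2 (_ : (u != w) = true); last by apply/negP => /eqP/(congr1 (@nat_of_ord _)); lia.
  move=> /(_ isT) /orP [] /forallP H.
    have := implyP (forallP (H (inord v)) w); rewrite ?r1 ?r2 !eqxx inordK //=; lia.
  have := implyP (forallP (H u) w); rewrite ?r1 ?r2 ?r3 !eqxx /=; lia.
have kn : v.-1 < n by lia.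
exists (Ordinal kn) => /=.
rewrite (_ : v.-1.+1 = v); last by lia.
by rewrite E -uvv inord_val.
Qed.

Lemma atoms_small n (a : Pi n) : 1 <= n -> atom (@Pi_le n) a -> exists k : 'I_n, a = PiE k.
Proof.
move=> n1 /andP [nmin hall].
case: a nmin hall => [[p|] h] nmin hall.
- have [v hv] : exists v, p v != None.
    case: (boolP [exists v, p v != None]) => [/existsP //|/existsPn H].
    exfalso.
    move/negP: nmin; apply; apply/forallP => [[[q|] hq]] //.
    rewrite /Pi_le /=; apply/subsetP => [[x y]]; rewrite inE /=.
    by have := H y; rewrite negbK => /eqP ->.
  have [k hk] := exists_edge h (ex_intro _ v hv).
  exists k.
  have := implyP (forallP hall (PiE k)) (PiE_le h hk).
  case/orP => [/eqP -> //|/forallP /(_ (PiBot n))].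
  by rewrite (negbTE (PiE_not_min k)).
- have k0 : 0 < n by [].
  have := implyP (forallP hall (PiE (Ordinal k0))) isT.
  case/orP => [/eqP/(congr1 val) //|/forallP /(_ (PiBot n))].
  by rewrite (negbTE (PiE_not_min _)).
Qed.

Lemma coatom_full n (p : parfun n) (h : in_Pi (Some p)) : increasing p ->
  (forall v, 0 < nat_of_ord v -> p v != None) -> coatom (@Pi_le n) (exist _ (Some p) h).
Proof.
move=> inc full; apply/andP; split.
  by apply/negP => /forallP /(_ (PiTop n)).
apply/forallP => [[[q|] hq]]; apply/implyP => //=.
  move=> sub; apply/orP; left; apply/eqP; apply: val_inj => /=; congr Some.
  have /andP [incq _] := hq.
  apply/ffunP => v; case: (posnP (nat_of_ord v)) => [v0|vpos].
    case E: (p v) => [u|]; first by have := forallP inc v; rewrite E v0.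
    case Eq: (q v) => [u|] //; by have := forallP incq v; rewrite Eq v0.
  case E: (p v) => [u|]; last by have := full v vpos; rewrite E.
  have : (u, v) \in edges p by rewrite inE /= E.
  by move/(subsetP sub); rewrite inE /= => /eqP ->.
move=> _; apply/forallP => [[[?|] ?]] //.
Qed.

Definition tg n (j : nat) (v : nat) : option nat :=
  if v == 0 then None else if j == n then Some (if v == 1 then 0 else 1)
  else Some (if v <= j.+1 then 0 else v.-1).

Lemma tg_lt n j v u : tg n j v = Some u -> u < v.
Proof.
rewrite /tg; case: (v =P 0) => // v0; case: (j =P n) => _ [<-].
  by case: (v =P 1); lia.
by case: ifP; lia.
Qed.

Definition Tp n (j : 'I_n.+1) := mk n (tg n j).

Lemma Tp_inc n j : increasing (@Tp n j).
Proof. apply: increasing_mk; exact: tg_lt. Qed.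

Lemma Tp_full n j v : 0 < nat_of_ord v -> @Tp n j v != None.
Proof.
move=> vpos; rewrite ffunE /tg (_ : (nat_of_ord v == 0) = false); last by lia.
by case: ifP.
Qed.

Lemma TP n j : in_Pi (Some (@Tp n j)).
Proof.
rewrite /= /priority_forest Tp_inc /=.
apply/forallP => x; apply/forallP => y.
by rewrite !(froot_full (Tp_inc j) (@Tp_full n j)) eqxx.
Qed.

Definition PiT n j : Pi n := exist _ (Some (@Tp n j)) (TP j).

Lemma omap_inord_inj n (o1 o2 : option nat) :
  (forall u, o1 = Some u -> u <= n) -> (forall u, o2 = Some u -> u <= n) ->
  omap (@inord n) o1 = omap (@inord n) o2 -> o1 = o2.
Proof.
move=> ha hb; case: o1 ha => [a|]; case: o2 hb => [b|] //= hb ha.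
case=> /(congr1 (@nat_of_ord _)).
have := ha a erefl; have := hb b erefl; move=> h1 h2; rewrite !inordK ?ltnS // => -> //.
Qed.

Lemma tg_diff n j j' : 3 <= n -> j < j' -> j' <= n ->
  exists2 v, v <= n & tg n j v != tg n j' v.
Proof.
move=> n3 jj' j'n.
case: (j' =P n) => [ej'|nj'].
  exists 3 => //; rewrite /tg /= ej' eqxx (_ : (j == n) = false); last by lia.
  by case: leqP.
exists j'.+1; first by lia.
rewrite /tg /= (_ : (j == n) = false); last by lia.
rewrite (_ : (j' == n) = false); last by lia.
rewrite leqnn (_ : (j'.+1 <= j.+1) = false); last by lia.
by apply/eqP => [[]]; lia.
Qed.

Lemma Tp_inj n : 3 <= n -> injective (@PiT n).
Proof.
move=> n3 j j' /(congr1 val) [] e.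
have key a b : a < b -> b <= n -> @Tp n (inord a) = @Tp n (inord b) -> False.
  move=> ab bn E.
  have [v vn hv] := tg_diff n3 ab bn.
  have := congr1 (fun p : parfun n => p (inord v)) E; rewrite !ffunE !inordK; try lia.
  move/omap_inord_inj => H.
  move/eqP: hv; apply; apply: H => u /tg_lt; lia.
case: (ltngtP (nat_of_ord j) (nat_of_ord j')) => h.
- by exfalso; apply: (key _ _ h); [have := ltn_ord j'; lia | rewrite !inord_val].
- by exfalso; apply: (key _ _ h); [have := ltn_ord j; lia | rewrite !inord_val].
- exact: val_inj.
Qed.

Theorem corollary5p2 (n : nat) : 3 <= n -> ~ Pi_self_dual n.
Proof.
move=> n3 [f [fbij fanti]].
set C := [set x : Pi n | coatom (@Pi_le n) x].
set A := [set x : Pi n | atom (@Pi_le n) x].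
have h1 : #|C| <= #|A|.
  rewrite -(card_imset C (bij_inj fbij)); apply: subset_leq_card.
  apply/subsetP => _ /imsetP [c cC ->]; rewrite inE.
  by apply: coatom_atom => //; rewrite inE in cC.
have h2 : #|A| <= n.
  apply: (@leq_trans #|[set PiE k | k : 'I_n]|); last by apply: (leq_trans (leq_imset_card _ _)); rewrite card_ord.
  apply: subset_leq_card; apply/subsetP => a; rewrite inE => /atoms_small.
  case=> [|k ->]; first by lia.
  by apply/imsetP; exists k.
have h3 : n.+1 <= #|C|.
  rewrite -{1}(card_ord n.+1) -(card_imset _ (Tp_inj n3)).
  apply: subset_leq_card; apply/subsetP => _ /imsetP [j _ ->].
  rewrite inE; apply: coatom_full; [exact: Tp_inc | exact: Tp_full].
lia.
Qed.
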